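(* Let $G$ be an acyclic mixed graph with mixed components $G_1,\dots,G_k$. If $G$ is HTC-identifiable, then every $G_j$ is HTC-identifiable. Moreover, $G$ is HTC-infinite-to-one if and only if some $G_j$ is HTC-infinite-to-one.
   Context: A mixed graph is $G=(V,D,B)$ with $V$ a finite node set, $D$ directed edges $v\to w$, $B$ symmetric bidirected edges $v\leftrightarrow w$, no self-loops; acyclic if $(V,D)$ has no directed cycle. $\mathrm{pa}(v)=\{w:w\to v\in D\}$, $\mathrm{sib}(v)=\{w:w\leftrightarrow v\in B\}$. A half-trek from $y$ to $w$ is a path $y\leftrightarrow w_0\to w_1\to\cdots\to w_r=w$ (left side $\{y\}$, right side $\{w_0,\dots,w_r\}$) or $y\to w_1\to\cdots\to w_r=w$, $r\ge0$ (left side $\{y\}$, right side $\{y,w_1,\dots,w_r\}$). $\mathrm{htr}(v)$ is the set of $w\in V\setminus(\{v\}\cup\mathrm{sib}(v))$ reachable from $v$ by a half-trek. A system of half-treks from $X$ to $Y$: half-treks with distinct sources forming $X$ and distinct targets forming $Y$; no sided intersection: pairwise disjoint left sides and pairwise disjoint right sides. $Y$ satisfies the half-trek criterion w.r.t. $v$ if $|Y|=|\mathrm{pa}(v)|$, $Y\cap(\{v\}\cup\mathrm{sib}(v))=\emptyset$, and there is a system of half-treks with no sided intersection from $Y$ to $\mathrm{pa}(v)$. $G$ is HTC-identifiable if there exist $(Y_v:v\in V)$, each satisfying the half-trek criterion w.r.t. $v$, and a total order $\prec$ on $V$ with $w\prec v$ whenever $w\in Y_v\cap\mathrm{htr}(v)$.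 $G$ is HTC-infinite-to-one if every family $(Y_v:v\in V)$ of subsets of $V$ either contains some $Y_v$ failing the half-trek criterion w.r.t. $v$ or contains a pair with $v\in Y_w$ and $w\in Y_v$. Mixed components: let $C_1,\dots,C_k$ be the node sets of the connected components of $(V,B)$. For $j\in[k]$ let $V_j=C_j\cup\bigcup_{v\in C_j}\mathrm{pa}(v)$, $D_j=\{v\to w\in D: v\in V_j, w\in C_j\}$, $B_j=B\cap(C_j\times C_j)$, and $G_j=(V_j,D_j,B_j)$ (all notions above are applied to $G_j$ with node set $V_j$). *)

(* Defs.v *)
From mathcomp Require Import all_boot.
Set Implicit Arguments. Unset Strict Implicit. Unset Printing Implicit Defensive.

Record mgraph (T : finType) := MGraph {
  nodes : {set T};
  dir : rel T;   (* dir v w  <->  v -> w in D *)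
  bid : rel T
}.

Section MixedGraphs.
Variable T : finType.
Implicit Types (G : mgraph T) (v w y : T) (X Y C : {set T}).

Definition wf_mgraph G : Prop :=
  (forall v w, dir G v w -> v \in nodes G /\ w \in nodes G) /\
  (forall v w, bid G v w -> v \in nodes G /\ w \in nodes G) /\
  (forall v w, bid G v w = bid G w v) /\
  (forall v, ~~ dir G v v) /\ (forall v, ~~ bid G v v).

Definition acyclic G : Prop :=
  ~ (exists v (p : seq T), p != [::] /\ path (dir G) v p /\ last v p = v).

Definition pa G v : {set T} := [set w in nodes G | dir G w v].
Definition sib G v : {set T} := [set w in nodes G | bid G w v].

(* A half-trek from y to w, described by a flag b and a node list p:
   - b = true : y <-> w_0 -> w_1 -> ... -> w_r = w, with p = [:: w_0; ...; w_r];
   - b = false: y -> w_1 -> ... -> w_r = w (r >= 0),    with p = [:: w_1; ...; w_r]. *)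
Definition is_htrek G y w (b : bool) (p : seq T) : bool :=
  (y \in nodes G) && uniq (y :: p) &&
  (if b then
     (if p is w0 :: q then [&& bid G y w0, path (dir G) w0 q & last w0 q == w]
      else false)
   else path (dir G) y p && (last y p == w)).

Definition hleft (y : T) : {set T} := [set y].
Definition hright (y : T) (b : bool) (p : seq T) : {set T} :=
  if b then [set x in p] else [set x in y :: p].

(* A system of half-treks with no sided intersection from X to Y: the half-trek
   with source x in X ends at f x, f is a bijection X -> Y, and left sides resp.
   right sides are pairwise disjoint. *)
Definition htsystem G X Y : Prop :=
  exists (f : T -> T) (hb : T -> bool) (hp : T -> seq T),
    {in X &, injective f} /\ f @: X = Y /\
    (forall x, x \in X -> is_htrek G x (f x) (hb x) (hp x)) /\
    (forall x x', x \in X -> x' \in X -> x != x' ->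
       [disjoint hleft x & hleft x'] /\
       [disjoint hright x (hb x) (hp x) & hright x' (hb x') (hp x')]).

Definition in_htr G v w : Prop :=
  [/\ w \in nodes G, w != v, w \notin sib G v & exists b p, is_htrek G v w b p].

Definition HTC G Y v : Prop :=
  [/\ Y \subset nodes G, #|Y| = #|pa G v|, [disjoint Y & v |: sib G v]
    & htsystem G Y (pa G v)].

Definition strict_total_order G (ord : rel T) : Prop :=
  (forall v, v \in nodes G -> ~~ ord v v) /\
  (forall u v w, u \in nodes G -> v \in nodes G -> w \in nodes G ->
      ord u v -> ord v w -> ord u w) /\
  (forall v w, v \in nodes G -> w \in nodes G -> v != w -> ord v w || ord w v).

Definition HTC_identifiable G : Prop :=
  exists (Y : T -> {set T}) (ord : rel T),
    (forall v, v \in nodes G -> HTC G (Y v) v) /\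
    strict_total_order G ord /\
    (forall v w, v \in nodes G -> w \in Y v -> in_htr G v w -> ord w v).

Definition HTC_infinite_to_one G : Prop :=
  forall Y : T -> {set T}, (forall v, v \in nodes G -> Y v \subset nodes G) ->
    (exists2 v, v \in nodes G & ~ HTC G (Y v) v) \/
    (exists v w, [/\ v \in nodes G, w \in nodes G, v \in Y w & w \in Y v]).

Definition is_bcomponent G C : Prop :=
  exists2 v, v \in nodes G & C = [set w in nodes G | connect (bid G) v w].

Definition mixed_comp G C : mgraph T :=
  let VC := C :|: \bigcup_(v in C) pa G v in
  MGraph VC (fun v w => [&& dir G v w, v \in VC & w \in C])
            (fun v w => [&& bid G v w, v \in C & w \in C]).

End MixedGraphs.

(* Main.v *)
Require Import Defs.
From mathcomp Require Import all_boot.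
From Stdlib Require Import ClassicalEpsilon Classical.
Set Implicit Arguments. Unset Strict Implicit. Unset Printing Implicit Defensive.

Section Aux.
Variable T : finType.
Variable G : mgraph T.
Hypothesis wfG : wf_mgraph G.
Variable C : {set T}.
Hypothesis compC : is_bcomponent G C.

Let VC := C :|: \bigcup_(v in C) pa G v.
Let GC := mixed_comp G C.

Lemma nodesGC : nodes GC = VC. Proof. by []. Qed.

Lemma C_nodes u : u \in C -> u \in nodes G.
Proof. case: compC => v0 _ ->; by rewrite inE => /andP[]. Qed.

Lemma C_VC u : u \in C -> u \in VC.
Proof. by move=> h; rewrite /VC inE h. Qed.

Lemma VC_nodes u : u \in VC -> u \in nodes G.
Proof.
rewrite /VC inE => /orP[/C_nodes //|/bigcupP[w _]].
by rewrite inE => /andP[].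
Qed.

Lemma pa_VC u w : u \in C -> dir G w u -> w \in VC.
Proof.
move=> uC d; rewrite /VC inE; apply/orP; right; apply/bigcupP; exists u => //.
rewrite inE d andbT; by case: wfG => h _; case: (h _ _ d).
Qed.

Lemma bid_closed u w : u \in C -> bid G u w -> w \in C.
Proof.
case: compC => v0 _ eC; rewrite eC !inE => /andP[_ c] b.
have [_ [h _]] := wfG; case: (h _ _ b) => _ ->.
by apply: connect_trans c (connect1 b).
Qed.

Lemma bid_closed' u w : u \in C -> bid G w u -> w \in C.
Proof. by move=> uC b; apply: (bid_closed uC); have [_ [_ [-> _]]] := wfG. Qed.

Lemma pa_GC v : v \in C -> pa GC v = pa G v.
Proof.
move=> vC; apply/setP => w; rewrite !inE /=. rewrite vC !andbT.
case d: (dir G w v); rewrite ?andbF // !andbT.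
have h := pa_VC vC d; rewrite /VC inE in h.
by rewrite /= inE h (VC_nodes (pa_VC vC d)).
Qed.

Lemma sib_GC v : v \in C -> sib GC v = sib G v.
Proof.
move=> vC; apply/setP => w; rewrite !inE /=. rewrite vC andbT.
case b: (bid G w v); rewrite ?andbF //= andbT.
have wC := bid_closed' vC b.
by rewrite wC (C_nodes wC).
Qed.

Lemma path_GC_G x q : path (dir GC) x q -> path (dir G) x q.
Proof. apply: sub_path => a b /= /andP[] //. Qed.

Lemma htrek_lift y t b p : is_htrek GC y t b p -> is_htrek G y t b p.
Proof.
rewrite /is_htrek => /andP[/andP[yV u] r].
rewrite (VC_nodes yV) u /=.
case: b r => [|]; last by case/andP=> /path_GC_G -> ->.
case: p {u} => // w0 q /and3P[/= /andP[bb _] /path_GC_G -> ->].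
by rewrite bb.
Qed.

Lemma last_in_C x q : path (dir GC) x q -> x \in C -> last x q \in C.
Proof.
elim: q x => //= x' q IH x /andP[/and3P[_ _ h] pq] _; exact: IH.
Qed.

Lemma htrek_target_C y t b p : is_htrek GC y t b p -> y \in C -> t \in C.
Proof.
rewrite /is_htrek => /andP[_ r] yC; case: b r.
  case: p => // w0 q /and3P[/= /and3P[_ _ w0C] pq /eqP <-].
  exact: last_in_C.
by case/andP=> pq /eqP <-; apply: last_in_C.
Qed.

Lemma htrek_src_notC y t b p : is_htrek GC y t b p -> y \notin C ->
  b = false /\ path (dir G) y p /\ last y p = t.
Proof.
rewrite /is_htrek => /andP[_ r] ynC; case: b r.
  by case: p => // w0 q /and3P[/= /and3P[_ yC _]]; rewrite yC in ynC.
by case/andP=> /path_GC_G pq /eqP.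
Qed.

Fixpoint tsplit (h : T) (r : seq T) : T * seq T :=
  match r with
  | [::] => (h, [::])
  | x :: r' => if has (fun u => u \notin C) (x :: r') then tsplit x r' else (h, x :: r')
  end.

Lemma tsplitP h r (e : rel T) :
  [/\ exists s1, h :: r = s1 ++ (tsplit h r).1 :: (tsplit h r).2,
      all (fun u => u \in C) (tsplit h r).2,
      (tsplit h r).1 \in C -> (tsplit h r).1 = h /\ (tsplit h r).2 = r,
      path e h r -> path e (tsplit h r).1 (tsplit h r).2
    & last (tsplit h r).1 (tsplit h r).2 = last h r].
Proof.
elim: r h => [|x r IH] h /=.
  by split=> //; exists [::].
case: ifP => hs.
  have [[s1 E] al hC pth lst] := IH x.
  split=> //.
  - by exists (h :: s1); rewrite /= -E.
  - move=> zC; have [ex er] := hC zC; move: hs zC al; rewrite ex er => hs xC al.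
    move: hs; rewrite /= xC /= => /hasP [u /(allP al) -> //].
  - by case/andP=> _ /pth.
split=> //.
- by exists [::].
- move/negbT: hs => hs; apply/allP => u uin.
  have hs' : ~~ has (fun u => u \notin C) (x :: r) by [].
  by have := (hasPn hs' u uin); rewrite negbK.
Qed.


Lemma pathGC z s2 : path (dir G) z s2 -> all (fun u => u \in C) s2 -> z \in VC ->
  path (dir GC) z s2.
Proof.
elim: s2 z => //= x s IH z /andP[d ps] /andP[xC al] zV.
by rewrite /= d zV xC /=; apply: IH => //; apply: C_VC.
Qed.

Lemma tsplit_trek h r t : path (dir G) h r -> uniq (h :: r) -> last h r = t -> t \in VC ->
  is_htrek GC (tsplit h r).1 t false (tsplit h r).2 /\
  {subset (tsplit h r).1 :: (tsplit h r).2 <= h :: r}.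
Proof.
move=> ph uh lh tV.
case: (tsplit h r) (tsplitP h r (dir G)) => z s2 /= [[s1 E] al _ pth lst].
have ps := pth ph; clear pth.
have zV : z \in VC.
  case: s2 ps al lst {E} => [_ _ /= ->|x s /= /andP[d _] /andP[xC _] _]; first by rewrite lh.
  exact: pa_VC xC d.
split; last by move=> u; rewrite E mem_cat orbC => ->.
have : uniq (s1 ++ z :: s2) by rewrite -E.
rewrite cat_uniq => /and3P[_ _ uz].
rewrite /is_htrek nodesGC zV uz /=.
by rewrite pathGC //= lst lh eqxx.
Qed.

Definition ttrunc (y : T) (b : bool) (p : seq T) : T * bool * seq T :=
  if b then (if p is w0 :: q then
               (if all (fun u => u \in C) p then (y, true, p)
                else ((tsplit w0 q).1, false, (tsplit w0 q).2))
             else (y, b, p))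
  else ((tsplit y p).1, false, (tsplit y p).2).

Lemma ttruncP y t b p : is_htrek G y t b p -> t \in VC ->
  [/\ is_htrek GC (ttrunc y b p).1.1 t (ttrunc y b p).1.2 (ttrunc y b p).2,
      hright (ttrunc y b p).1.1 (ttrunc y b p).1.2 (ttrunc y b p).2 \subset hright y b p,
      (ttrunc y b p).1.1 \in C -> (ttrunc y b p).1.1 = y
    & ((ttrunc y b p).1.1 \in C) || ((ttrunc y b p).1.1 \in hright y b p)].
Proof.
move=> Hy tV; move: (Hy); rewrite {1}/is_htrek => /andP[/andP[yN u] r]; case: b r {Hy} => [|].
  case: p u => // w0 q u /and3P[bb pq /eqP lq] /=.
  case: ifP => [/andP[w0C alq]|nal] /=.
    have yC := bid_closed' w0C bb.
    split=> //; last by rewrite yC.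
    have yV : y \in C :|: \bigcup_(v in C) pa G v := C_VC yC.
    rewrite /= in u; rewrite /is_htrek /= yV u bb yC w0C /= pathGC ?lq ?eqxx //; exact: C_VC.

  move: u; rewrite /= => /andP[_ u].
  have [ht sub] := tsplit_trek pq u lq tV.
  have [_ _ hC _ _] := tsplitP w0 q (dir G).
  have znC : (tsplit w0 q).1 \notin C.
    apply/negP => zC; have [e1 e2] := hC zC; have [_ al _ _ _] := tsplitP w0 q (dir G).
    rewrite e2 in al; rewrite e1 in zC.
    by move: nal; rewrite /= zC al.
  split=> //.
  - by apply/subsetP => x; rewrite !inE => /sub.
  - by move=> zC; rewrite zC in znC.
  - by rewrite (negbTE znC) /= inE sub // mem_head.
case/andP=> py /eqP ly /=.
have [ht sub] := tsplit_trek py u ly tV.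
have [_ _ hC _ _] := tsplitP y p (dir G).
split=> //.
- by apply/subsetP => x; rewrite !inE => /sub.
- by case/hC.
- by rewrite inE sub ?mem_head ?orbT.
Qed.


Lemma HTC_restrict Y v : v \in C -> HTC G Y v ->
  exists Y', HTC GC Y' v /\ (forall z, z \in Y' -> z \in C -> z \in Y).
Proof.
move=> vC [YN cardY disj [f [hb [hp [finj [fim [ftr fdis]]]]]]].
pose g x := (ttrunc x (hb x) (hp x)).1.1.
pose tb x := (ttrunc x (hb x) (hp x)).1.2.
pose tp x := (ttrunc x (hb x) (hp x)).2.
have fV x : x \in Y -> f x \in VC.
  move=> xY; have : f x \in pa G v by rewrite -fim; apply: imset_f.
  by rewrite inE => /andP[_ d]; apply: pa_VC vC d.
have TP x : x \in Y -> [/\ is_htrek GC (g x) (f x) (tb x) (tp x),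
      hright (g x) (tb x) (tp x) \subset hright x (hb x) (hp x),
      g x \in C -> g x = x & (g x \in C) || (g x \in hright x (hb x) (hp x))].
  by move=> xY; apply: ttruncP; [apply: ftr | apply: fV].
have ginj : {in Y &, injective g}.
  move=> x1 x2 h1 h2 e; apply/eqP/negPn/negP => ne.
  have [_ _ c1 d1] := TP x1 h1; have [_ _ c2 d2] := TP x2 h2.
  case zC: (g x1 \in C).
    have e1 := c1 zC; have zC2 : g x2 \in C by rewrite -e.
    by move/eqP: ne; apply; rewrite -e1 -(c2 zC2) e.
  rewrite zC /= in d1; rewrite -e zC /= in d2.
  have [_ dr] := fdis _ _ h1 h2 ne.
  by rewrite (disjointFr dr d1) in d2.
pose inv z := odflt z [pick x in Y | g x == z].
have invK x : x \in Y -> inv (g x) = x.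
  move=> xY; rewrite /inv; case: pickP => [x' /andP[x'Y /eqP e] | none] /=.
    exact: ginj.
  by have := none x; rewrite xY eqxx.
exists (g @: Y); split; last first.
  by move=> z /imsetP[x xY ->] zC; have [_ _ c _] := TP x xY; rewrite (c zC).
split.
- apply/subsetP => z /imsetP[x xY ->]; have [ht _ _ _] := TP x xY.
  by case/andP: ht => /andP[].
- by rewrite card_in_imset // cardY pa_GC.
- rewrite sib_GC // disjoints_subset; apply/subsetP => z /imsetP[x xY ->].
  have [_ _ c _] := TP x xY; rewrite !inE.
  case zC: (g x \in C).
    rewrite (c zC); move: disj; rewrite disjoints_subset => /subsetP /(_ x xY).
    by rewrite !inE.
  apply/negP => /orP[/eqP e|]; first by rewrite e vC in zC.
  by case/andP => _ /(bid_closed' vC); rewrite zC.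
exists (fun z => f (inv z)), (fun z => tb (inv z)), (fun z => tp (inv z)).
split; [|split; [|split]].
- move=> z1 z2 /imsetP[x1 h1 ->] /imsetP[x2 h2 ->]; rewrite !invK // => e.
  by rewrite (finj _ _ h1 h2 e).
- rewrite pa_GC // -fim -imset_comp; apply: eq_in_imset => x xY /=.
  by rewrite invK.
- by move=> z /imsetP[x xY ->]; rewrite invK //; have [] := TP x xY.
- move=> z1 z2 /imsetP[x1 h1 ->] /imsetP[x2 h2 ->]; rewrite !invK // => ne.
  have ne' : x1 != x2 by apply: contra ne => /eqP ->.
  have [_ dr] := fdis _ _ h1 h2 ne'.
  have [_ s1 _ _] := TP x1 h1; have [_ s2 _ _] := TP x2 h2.
  split; first by rewrite /hleft disjoints_subset sub1set !inE.
  exact: (disjointWl s1 (disjointWr s2 dr)).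
Qed.

Lemma HTC_lift Y v : v \in C -> HTC GC Y v -> HTC G Y v.
Proof.
move=> vC [YN cardY disj [f [hb [hp [finj [fim [ftr fdis]]]]]]].
split.
- by apply/subsetP => z /(subsetP YN) /VC_nodes.
- by rewrite cardY pa_GC.
- by rewrite -sib_GC.
exists f, hb, hp; split; [|split; [|split]] => //.
- by rewrite -pa_GC.
- by move=> x xY; apply: htrek_lift; apply: ftr.
Qed.

Lemma HTC_outer v : v \in VC -> v \notin C -> HTC GC set0 v.
Proof.
move=> vV vnC.
have pa0 : pa GC v = set0.
  by apply/setP => w; rewrite !inE /= (negbTE vnC) !andbF.
split.
- exact: sub0set.
- by rewrite pa0 !cards0.
- by rewrite disjoints_subset sub0set.
exists id, (fun _ => false), (fun _ => [::]); split; [|split; [|split]].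
- by move=> x y; rewrite inE.
- by rewrite pa0 imset0.
- by move=> x; rewrite inE.
- by move=> x y; rewrite inE.
Qed.


Lemma anc_lemma Y v y : v \in C -> HTC GC Y v -> y \in Y -> y \notin C ->
  exists q, [/\ q != [::], path (dir G) y q & last y q = v].
Proof.
move=> vC [_ _ _ [f [hb [hp [_ [fim [ftr _]]]]]]] yY ynC.
have [_ [pq lq]] := htrek_src_notC (ftr y yY) ynC.
have : f y \in pa G v by rewrite -pa_GC // -fim; apply: imset_f.
rewrite inE => /andP[_ d].
exists (rcons (hp y) v); split.
- by case: (hp y).
- by rewrite rcons_path pq lq d.
- by rewrite last_rcons.
Qed.

Lemma in_htr_lift v w : v \in C -> in_htr GC v w -> w \in C /\ in_htr G v w.
Proof.
move=> vC [wV ne ns [b [p ht]]].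
have wC := htrek_target_C ht vC.
split=> //; split=> //.
- exact: C_nodes.
- by rewrite -sib_GC.
- by exists b, p; apply: htrek_lift.
Qed.

Lemma sto_restrict ord : strict_total_order G ord -> strict_total_order GC ord.
Proof.
case=> [irr [tr tot]]; split; [|split].
- by move=> v /VC_nodes; apply: irr.
- by move=> u v w /VC_nodes hu /VC_nodes hv /VC_nodes hw; apply: tr.
- by move=> v w /VC_nodes hv /VC_nodes hw; apply: tot.
Qed.

Lemma restrict_family (Y : T -> {set T}) :
  (forall v, v \in C -> HTC G (Y v) v) ->
  exists Y' : T -> {set T},
    (forall v, v \in C -> HTC GC (Y' v) v /\ (forall z, z \in Y' v -> z \in C -> z \in Y v)) /\
    (forall v, v \notin C -> Y' v = set0).
Proof.
move=> hY.
pose P v (Z : {set T}) := (v \in C -> HTC GC Z v /\ (forall z, z \in Z -> z \in C -> z \in Y v))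
   /\ (v \notin C -> Z = set0).
have exP v : exists Z, P v Z.
  case vC: (v \in C).
    have [Z [h1 h2]] := HTC_restrict vC (hY v vC).
    by exists Z; split => //; rewrite vC.
  by exists set0; split => //; rewrite vC.
exists (fun v => epsilon (inhabits set0) (P v)); split => v.
- by have [h _] := epsilon_spec (inhabits set0) (P v) (exP v); apply: h.
- by have [_ h] := epsilon_spec (inhabits set0) (P v) (exP v); apply: h.
Qed.

End Aux.

Section Comp.
Variable T : finType.
Variable G : mgraph T.
Hypothesis wfG : wf_mgraph G.

Definition compo v : {set T} := [set u in nodes G | connect (bid G) v u].

Lemma compo_is v : v \in nodes G -> is_bcomponent G (compo v).
Proof. by move=> vN; exists v. Qed.

Lemma compo_self v : v \in nodes G -> v \in compo v.
Proof. by move=> vN; rewrite inE vN connect0. Qed.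

Lemma compo_eq u v : u \in compo v -> compo u = compo v.
Proof.
rewrite inE => /andP[_ c].
have sym : connect_sym (bid G).
  by apply: sym_connect_sym => x y; have [_ [_ [-> _]]] := wfG.
apply/setP => x; rewrite !inE.
by rewrite (same_connect sym c).
Qed.

End Comp.

Theorem mainTheorem12 (T : finType) (G : mgraph T) :
  wf_mgraph G -> acyclic G ->
  (HTC_identifiable G ->
     forall C : {set T}, is_bcomponent G C -> HTC_identifiable (mixed_comp G C)) /\
  (HTC_infinite_to_one G <->
     exists2 C : {set T}, is_bcomponent G C & HTC_infinite_to_one (mixed_comp G C)).
Proof.
move=> wfG acG; split.
  move=> [Y [ord [hY [sto hord]]]] C compC.
  have [Y' [h1 h2]] := restrict_family wfG compC (fun v vC => hY v (C_nodes compC vC)).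
  exists Y', ord; split; [|split].
  - move=> v vV; case vC: (v \in C); first by have [] := h1 v vC.
    rewrite h2 ?vC //; apply: HTC_outer => //; by rewrite vC.
  - exact: sto_restrict.
  - move=> v w vV wY hin; case vC: (v \in C); last first.
      by rewrite h2 ?vC // inE in wY.
    have [wC hin'] := in_htr_lift wfG compC vC hin.
    have [_ h] := h1 v vC.
    exact: hord (C_nodes compC vC) (h w wY wC) hin'.
split.
  move=> Hinf; apply: NNPP => Hno.
  have Hall C : is_bcomponent G C -> ~ HTC_infinite_to_one (mixed_comp G C).
    by move=> hC h; apply: Hno; exists C.
  pose Q C (F : T -> {set T}) := is_bcomponent G C ->
    [/\ forall v, v \in nodes (mixed_comp G C) -> F v \subset nodes (mixed_comp G C),
        forall v, v \in nodes (mixed_comp G C) -> HTC (mixed_comp G C) (F v) v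
      & ~ exists v w, [/\ v \in nodes (mixed_comp G C), w \in nodes (mixed_comp G C),
                          v \in F w & w \in F v]].
  have exQ C : exists F, Q C F.
    case: (classic (is_bcomponent G C)) => hC; last by exists (fun _ => set0).
    apply: NNPP => hn; apply: (Hall C hC) => F hF.
    apply: NNPP => hor; apply: hn; exists F => _; split => //.
    - move=> v vV; apply: NNPP => nh; apply: hor; left; by exists v.
    - by move=> hm; apply: hor; right.
  pose FF C := epsilon (inhabits (fun _ : T => (set0 : {set T}))) (Q C).
  have FFP C : Q C (FF C) := epsilon_spec _ (Q C) (exQ C).
  pose Y v := FF (compo G v) v.
  have hYv v : v \in nodes G -> HTC G (Y v) v.
    move=> vN; have cv := compo_is vN; have sv := compo_self vN.
    have [_ hh _] := FFP _ cv.
    exact: (HTC_lift wfG cv sv (hh v (C_VC G sv))).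
  have := Hinf Y; case.
  - by move=> v vN; case: (hYv v vN).
  - by case=> v vN nH; apply: nH; apply: hYv.
  case=> v [w [vN wN vYw wYv]].
  have cv := compo_is vN; have sv := compo_self vN.
  have cw := compo_is wN; have sw := compo_self wN.
  case vw: (v \in compo G w).
    have e := compo_eq wfG vw.
    have [_ _ hm] := FFP _ cw; apply: hm; exists v, w; split.
    + by rewrite /= inE vw.
    + by rewrite /= inE sw.
    + exact: vYw.
    + by move: wYv; rewrite /Y e.
  case wv: (w \in compo G v).
    by have e := compo_eq wfG wv; rewrite e sv in vw.
  have [_ hw _] := FFP _ cw; have [_ hv _] := FFP _ cv.
  have [q1 [n1 p1 l1]] := anc_lemma wfG cw sw (hw w (C_VC G sw)) vYw (negbT vw).
  have [q2 [n2 p2 l2]] := anc_lemma wfG cv sv (hv v (C_VC G sv)) wYv (negbT wv).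
  apply: acG; exists v, (q1 ++ q2); split; [|split].
  - by move: n1; case: (q1).
  - by rewrite cat_path p1 l1 p2.
  - by rewrite last_cat l1 l2.
move=> [C compC HC] Y YN.
case: (classic (exists2 v, v \in nodes G & ~ HTC G (Y v) v)) => hn; first by left.
have hall v : v \in nodes G -> HTC G (Y v) v.
  by move=> vN; apply: NNPP => nh; apply: hn; exists v.
have [Y' [h1 h2]] := restrict_family wfG compC (fun v vC => hall v (C_nodes compC vC)).
have := HC Y'; case.
- move=> v vV; case vC: (v \in C).
    by have [[] ] := h1 v vC.
  by rewrite h2 ?vC // sub0set.
- case=> v vV nh; exfalso; apply: nh; case vC: (v \in C); first by have [] := h1 v vC.
  rewrite h2 ?vC //; apply: HTC_outer => //; by rewrite vC.
case=> v [w [vV wV vY wY]].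
have wC : w \in C by apply: contraT => wnC; rewrite h2 // inE in vY.
have vC : v \in C by apply: contraT => vnC; rewrite h2 // inE in wY.
right; exists v, w; split.
- move: vC; apply: (C_nodes compC).
- move: wC; apply: (C_nodes compC).
- by have [_ h] := h1 w wC; apply: h.
- by have [_ h] := h1 v vC; apply: h.
Qed.
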